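(* Let $G$ be a graph with $V(G)=[n]$ and without isolated vertices, and let $I=[n]\setminus[n-i]$ be a maximal independent set of $G$ with $\gamma(G;I)=i\gamma(G)$. Write $\overline{S}=[n]\setminus S$ and order the facets of $\mathcal{NC}(G)$ by $\prec$. For $\sigma\in\mathcal{NC}(G)$ let $\beta(\sigma)=|N(\overline{\sigma}\cap\overline{I})\cap\overline{\sigma}\cap I|$. Then for every $\sigma\in\mathcal{NC}(G)$ with $\beta(\sigma)\ge1$ we have $|M_\prec(\sigma)|\le n-i\gamma(G)-\beta(\sigma)$, and for every $\sigma\in\mathcal{NC}(G)$ we have $|M_\prec(\sigma)|\le n-i\gamma(G)-1$.
   Context: $\mathcal{NC}(G)$ is the simplicial complex on $V(G)$ whose faces are the sets $W\subseteq V(G)$ such that $V(G)\setminus W$ contains both endpoints of some edge; its facets are the sets $[n]\setminus\{a,b\}$ for edges $ab$. $\gamma(G;A)$ is the minimum size of a set $D$ such that every vertex of $A$ has a neighbor in $D$; $i\gamma(G)=\max\{\gamma(G;I): I\text{ independent}\}$. $N(S)=\{v: uv\in E(G)\text{ for some }u\in S\}$. For edges $a_1b_1,a_2b_2$ with $a_j<b_j$, $a_1b_1<_L a_2b_2$ if $b_1<b_2$, or $b_1=b_2$ and $a_1<a_2$; for distinct facets, $\sigma\prec\tau$ iff $\overline{\sigma}<_L\overline{\tau}$, giving a linear order $\sigma_1,\dots,\sigma_m$ of facets. For a face $\sigma$, let $i$ be least with $\sigma\subseteq\sigma_i$; if $i=1$, $\mathrm{mes}_\prec(\sigma)$ is empty;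 otherwise $\mathrm{mes}_\prec(\sigma)=(v_1,\dots,v_{i-1})$ with $v_1=\min(\sigma\setminus\sigma_1)$ and, for $2\le k\le i-1$, $v_k=\min(\{v_1,\dots,v_{k-1}\}\cap(\sigma\setminus\sigma_k))$ if nonempty, else $v_k=\min(\sigma\setminus\sigma_k)$. $M_\prec(\sigma)$ is the set of vertices appearing in $\mathrm{mes}_\prec(\sigma)$. *)

(* Defs.v *)
(* Graph on vertex set [n], encoded as 'I_n (vertex k+1 of
   the paper is the ordinal k; all numeric comparisons are preserved). *)
From mathcomp Require Import all_boot.
Set Implicit Arguments. Unset Strict Implicit. Unset Printing Implicit Defensive.

Section Defs.
Variables (n : nat) (e : rel 'I_n).

Definition simple_graph : Prop := symmetric e /\ irreflexive e.

Definition no_isolated : Prop := forall v : 'I_n, exists u, e v u.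

Definition nbhd (S : {set 'I_n}) : {set 'I_n} :=
  [set v | [exists u in S, e u v]].

Definition independent (I : {set 'I_n}) : bool :=
  [forall u in I, forall v in I, ~~ e u v].

Definition maximal_independent (I : {set 'I_n}) : Prop :=
  independent I /\
  forall J : {set 'I_n}, independent J -> I \subset J -> J = I.

Definition dominates (D A : {set 'I_n}) : bool :=
  [forall a in A, exists d in D, e a d].

(* gamma(G;A): minimum size of such a D (the whole vertex set works when G
   has no isolated vertices, so the default n is never the "empty min") *)
Definition gammaA (A : {set 'I_n}) : nat :=
  \big[minn/n]_(D : {set 'I_n} | dominates D A) #|D|.

Definition igamma : nat :=
  \max_(I : {set 'I_n} | independent I) gammaA I.

Definition NCface (s : {set 'I_n}) : bool :=
  [exists a, exists b, [&& e a b, a \notin s & b \notin s]].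

Definition is_edge_pair (p : 'I_n * 'I_n) : bool :=
  ((p.1 : nat) < p.2) && e p.1 p.2.

Definition edges : seq ('I_n * 'I_n) :=
  filter is_edge_pair [seq (a, b) | a <- enum 'I_n, b <- enum 'I_n].

Definition leL (p q : 'I_n * 'I_n) : bool :=
  ((p.2 : nat) < q.2) || ((p.2 == q.2) && ((p.1 : nat) <= q.1)).

Definition facets : seq {set 'I_n} :=
  [seq [set: 'I_n] :\ p.1 :\ p.2 | p : 'I_n * 'I_n <- sort leL edges].

Definition setmin (D : {set 'I_n}) : option 'I_n :=
  [pick x in D | [forall y in D, (x <= y)%N]].

Definition mes_step (s : {set 'I_n}) (acc : seq 'I_n) (F : {set 'I_n}) :
    seq 'I_n :=
  let D := s :\: F in
  let C := [set x in acc] :&: D in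
  match (if setmin C is Some v then Some v else setmin D) with
  | Some v => rcons acc v
  | None => acc
  end.

(* mes(sigma) = (v_1, ..., v_{i-1}) where sigma_i is the first facet
   containing sigma (0-based index = find ...) *)
Definition mes (s : {set 'I_n}) : seq 'I_n :=
  foldl (mes_step s) [::] (take (find (fun F : {set 'I_n} => s \subset F) facets) facets).

Definition Mset (s : {set 'I_n}) : {set 'I_n} := [set x in mes s].

End Defs.

(* Main.v *)
Require Import Defs.
From mathcomp Require Import all_boot.
From mathcomp Require Import zify.
Set Implicit Arguments. Unset Strict Implicit. Unset Printing Implicit Defensive.

Lemma setminP n (D : {set 'I_n}) v :
  setmin D = Some v -> v \in D /\ forall y, y \in D -> (v <= y)%N.
Proof.
rewrite /setmin; case: pickP => // x /andP[xD /forallP H] [<-]; split => // y yD.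
by move: (H y); rewrite yD.
Qed.

Definition Qv n (e : rel 'I_n) (s : {set 'I_n}) (bm : nat) (x : 'I_n) : Prop :=
  x \in s /\ (x <= bm)%N /\
  ((exists a : 'I_n, (a < x)%N /\ e a x /\ a \notin s) \/
   (exists b : 'I_n, (x < b)%N /\ e x b)).

Definition goodF n (e : rel 'I_n) (bm : nat) (F : {set 'I_n}) : Prop :=
  exists a b : 'I_n, F = [set: 'I_n] :\ a :\ b /\ e a b /\ (a < b)%N /\ (b <= bm)%N.

Lemma step_ok n (e : rel 'I_n) s bm acc F :
  goodF e bm F -> (forall x, x \in acc -> Qv e s bm x) ->
  forall x, x \in mes_step s acc F -> Qv e s bm x.
Proof.
move=> [a [b [-> [eab [ab bbm]]]]] Hacc.
have inD : forall x, (x \in s :\: ([set: 'I_n] :\ a :\ b)) = (x \in s) && ((x == a) || (x == b)).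
  move=> x; rewrite !inE.
  by case: (x == a); case: (x == b); case: (x \in s).
rewrite /mes_step.
case Hc: (setmin ([set x in acc] :&: _)) => [v|].
  have [vC _] := setminP Hc.
  move: vC; rewrite !inE => /andP[vacc _].
  by move=> x; rewrite mem_rcons inE => /orP[/eqP->|]; apply: Hacc.
case Hd: (setmin _) => [v|]; last exact: Hacc.
have [vD vmin] := setminP Hd.
move=> x; rewrite mem_rcons inE => /orP[/eqP->|]; last exact: Hacc.
move: (vD); rewrite inD => /andP[vs /orP[/eqP va|/eqP vb]].
- subst v. split=> //; split; first lia. by right; exists b.
- subst v. split=> //; split=> //. left; exists a; split=> //; split=> //.
  apply/negP => as_. have := vmin a; rewrite inD as_ eqxx /= => /(_ isT). lia.
Qed.

Lemma fold_ok n (e : rel 'I_n) s bm L : forall acc,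
  (forall F, F \in L -> goodF e bm F) -> (forall x, x \in acc -> Qv e s bm x) ->
  forall x, x \in foldl (mes_step s) acc L -> Qv e s bm x.
Proof.
elim: L => [|F L IH] acc HL Hacc //=.
apply: IH.
  by move=> G GL; apply: HL; rewrite inE GL orbT.
by apply: step_ok => //; apply: HL; rewrite inE eqxx.
Qed.

Lemma leLE n (p q : 'I_n * 'I_n) :
  leL p q = ((p.2 < q.2)%N || ((p.2 == q.2 :> nat) && (p.1 <= q.1)%N)).
Proof. by []. Qed.

Lemma leL_trans n : transitive (@leL n).
Proof.
move=> q p r; rewrite !leLE => /orP[h1|/andP[/eqP h1 h2]] /orP[h3|/andP[/eqP h3 h4]];
 apply/orP; try (left; lia). right; apply/andP; split; [apply/eqP; lia| lia].
Qed.

Lemma leL_refl n : reflexive (@leL n).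
Proof. by move=> p; rewrite leLE eqxx leqnn orbT. Qed.

Lemma leL_total n : total (@leL n).
Proof.
move=> p q; rewrite !leLE.
case: (ltngtP p.2 q.2) => h //=; rewrite ?orbT //.
by rewrite ?h ?eqxx /= ?leq_total ?orbT.
Qed.

Lemma mem_edges n (e : rel 'I_n) (p : 'I_n * 'I_n) :
  (p \in edges e) = ((p.1 < p.2)%N && e p.1 p.2).
Proof.
rewrite /edges mem_filter /is_edge_pair.
have -> // : p \in [seq (x, y) | x <- enum 'I_n, y <- enum 'I_n].
  by case: p => a b; apply: (allpairs_f (fun x y => (x, y))); rewrite mem_enum.
by rewrite andbT.
Qed.

Lemma mes_facts n (e : rel 'I_n) s : symmetric e -> irreflexive e -> NCface e s ->
  exists a b : 'I_n, [/\ a \notin s, b \notin s, e a b, (a < b)%N &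
    forall x, x \in Mset e s -> Qv e s b x].
Proof.
move=> sym irr /existsP[a0 /existsP[b0 /and3P[eab as0 bs0]]].
have [q0 [q0E q0s1 q0s2]] : exists q0 : 'I_n * 'I_n,
    [/\ q0 \in edges e, q0.1 \notin s & q0.2 \notin s].
  case: (ltngtP a0 b0) => h.
  - by exists (a0, b0); rewrite mem_edges /= h eab.
  - by exists (b0, a0); rewrite mem_edges /= h sym eab.
  - have : a0 = b0 by apply: val_inj.
    by move=> E; move: eab; rewrite E irr.
set f := fun p : 'I_n * 'I_n => [set: 'I_n] :\ p.1 :\ p.2.
set E := sort (@leL n) (edges e).
have facE : facets e = map f E by [].
have hasF : has (fun F : {set 'I_n} => s \subset F) (facets e).
  apply/hasP; exists (f q0); first by rewrite facE map_f // mem_sort.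
  apply/subsetP => x xs; rewrite /f !inE andbT.
  by apply/andP; split; apply/negP => /eqP ex; subst x; [move: q0s2|move: q0s1]; rewrite xs.
set k := find (fun F : {set 'I_n} => s \subset F) (facets e).
have kE : (k < size E)%N by rewrite -(size_map f) -facE -has_find.
set p := nth q0 E k.
have pE : p \in edges e by rewrite -(mem_sort (@leL n)) mem_nth.
have sp : s \subset f p.
  by have := nth_find [set: 'I_n] hasF; rewrite -/k facE (nth_map q0).
move: pE; rewrite mem_edges => /andP[p12 ep].
have ps1 : p.1 \notin s.
  by apply/negP => /(subsetP sp); rewrite /f !inE eqxx andbF.
have ps2 : p.2 \notin s.
  by apply/negP => /(subsetP sp); rewrite /f !inE eqxx.
exists p.1, p.2; split => // x.
rewrite /Mset inE /mes -/k.
apply: fold_ok => // F.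
rewrite facE -map_take => /mapP[q qin ->].
have [j jlt qj] : exists2 j, (j < size (take k E))%N & nth q0 (take k E) j = q.
  by apply/nthP.
have jk : (j < k)%N by move: jlt; rewrite size_take kE.
have qE : q \in E by move: qin; apply: mem_take.
have lq : leL q p.
  rewrite -qj nth_take //.
  apply: (sorted_leq_nth (@leL_trans n) (@leL_refl n)).
  - exact: sort_sorted (@leL_total n) _.
  - exact: (ltn_trans jk kE).
  - exact: kE.
  - exact: ltnW jk.
move: qE; rewrite mem_sort mem_edges => /andP[q12 eq].
exists q.1, q.2; split => //; split => //; split => //.
by move: lq; rewrite leLE => /orP[/ltnW //|/andP[/eqP -> _]].
Qed.

Lemma gammaA_le n (e : rel 'I_n) (A D : {set 'I_n}) :
  dominates e D A -> (gammaA e A <= #|D|)%N.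
Proof.
move=> dD; rewrite /gammaA.
have : D \in index_enum {set 'I_n} by rewrite mem_index_enum.
elim: (index_enum _) => [//|X r IH].
rewrite inE big_cons => /orP[/eqP <-|Dr].
  by rewrite dD geq_minl.
case: ifP => _; last exact: IH.
by apply: leq_trans (geq_minr _ _) (IH Dr).
Qed.

Lemma setI0P (T : finType) (A B : {set T}) :
  (forall x, x \in A -> x \in B -> False) -> A :&: B = set0.
Proof.
move=> H; apply/setP => x; rewrite in_set0 in_setI.
by apply/negbTE/negP => /andP[xa xb]; apply: (H x).
Qed.

Lemma arith0 g d d0 fu u cIM c mi m :
  (g <= d)%N -> (d <= d0 + fu)%N -> (fu <= u)%N -> cIM + d0 = c -> mi + cIM = m ->
  (g + m <= c + mi + u)%N.
Proof. lia. Qed.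

Lemma arith4 g d d0' fu u d0 cIM c mi m :
  (g <= d)%N -> (d <= d0' + fu)%N -> (fu <= u)%N -> d0 = 1 + d0' -> cIM + d0 = c -> mi + cIM = m ->
  (g + m + 1 <= c + mi + u)%N.
Proof. lia. Qed.

Lemma arith1 g m c mi u bb x ii nn :
  (g + m <= c + mi + u)%N -> mi + u + bb = x -> (x <= ii)%N -> ii + c = nn ->
  (m + g + bb <= nn)%N.
Proof. lia. Qed.

Lemma arith2 g m c mi u bb x ii nn :
  (g + m + 1 <= c + mi + u)%N -> mi + u + bb = x -> (x <= ii)%N -> ii + c = nn ->
  (m + g + 1 <= nn)%N.
Proof. lia. Qed.

Lemma arith3 g m c mi u bb x ii nn :
  (g + m <= c + mi + u)%N -> mi + u + bb = x -> (x < ii)%N -> ii + c = nn ->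
  (m + g + 1 <= nn)%N.
Proof. lia. Qed.

Theorem mainTheorem4 (n : nat) (e : rel 'I_n) (i : nat) :
  simple_graph e ->
  no_isolated e ->
  i <= n ->
  let I := [set v : 'I_n | n - i <= v] in
  maximal_independent e I ->
  gammaA e I = igamma e ->
  let beta := fun s : {set 'I_n} =>
    #|nbhd e (~: s :&: ~: I) :&: ~: s :&: I| in
  (forall s : {set 'I_n}, NCface e s -> 1 <= beta s ->
     #|Mset e s| + igamma e + beta s <= n) /\
  (forall s : {set 'I_n}, NCface e s ->
     #|Mset e s| + igamma e + 1 <= n).
Proof.
move=> [sym irr] noiso ile I [indI _] hg beta.
have hI : forall v, (v \in I) = (n - i <= v) by move=> v; rewrite inE.
clearbody I.
have indep : forall u v, u \in I -> v \in I -> ~~ e u v.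
  move=> u v uI vI; move/forallP: indI => /(_ u); rewrite uI /= => /forallP/(_ v).
  by rewrite vI.
set fp := fun u : 'I_n => odflt u [pick w | e u w].
have fpP : forall u, e u (fp u).
  move=> u; rewrite /fp; case: pickP => [w //|H].
  by have [w ew] := noiso u; move: (H w); rewrite ew.
have nI : #|I| + #|~: I| = n by rewrite cardsC card_ord.
have key : forall s, NCface e s ->
  let M := Mset e s in
  let D0 := ~: I :\: M in
  let U := [set u in I | ~~ [exists d in D0, e u d]] in
  let B := nbhd e (~: s :&: ~: I) :&: ~: s :&: I in
  [/\ (gammaA e I + #|M| <= #|~: I| + #|M :&: I| + #|U|)%N,
      #|M :&: I| + #|U| + #|B| = #|(M :&: I) :|: U :|: B|,
      (M :&: I) :|: U :|: B \subset I &
      (B = set0 -> (gammaA e I + #|M| + 1 <= #|~: I| + #|M :&: I| + #|U|)%N \/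
         (#|(M :&: I) :|: U :|: B| < #|I|)%N)].
  move=> s ncs M D0 U B.
  have [a [b [as_ bs eab ab QM]]] := mes_facts sym irr ncs.
  have QM' : forall x, x \in M -> Qv e s b x := QM.
  clearbody M. clear QM. rename QM' into QM.
  have Ms : forall x, x \in M -> x \in s by move=> x /QM[].
  have MInb : forall x, x \in M -> x \in I -> exists2 w, e x w & w \in D0.
    move=> x xM xI; case: (QM x xM) => _ [_ [[w [wx [ewx ws]]]|[w [xw exw]]]].
    - apply: (ex_intro2 _ _ w); first by rewrite sym.
      rewrite in_setD in_setC; apply/andP; split.
        by apply/negP => /Ms; rewrite (negbTE ws).
      by apply/negP => wI; move: (indep _ _ wI xI); rewrite ewx.
    - exfalso; have wI : w \in I by move: xI; rewrite !hI => h; apply: leq_trans h (ltnW xw).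
      by move: (indep _ _ xI wI); rewrite exw.
  split.
  - set D := D0 :|: [set fp u | u in U].
    have dD : dominates e D I.
      apply/forallP => u; apply/implyP => uI.
      case: (boolP [exists d in D0, e u d]) => [/existsP[d /andP[dD eud]]|nd].
        by apply/existsP; exists d; rewrite inE dD eud.
      apply/existsP; exists (fp u); rewrite fpP andbT inE; apply/orP; right.
      by apply: imset_f; rewrite inE uI nd.
    have g1 := gammaA_le dD.
    have g2 : (#|D| <= #|D0| + #|[set fp u | u in U]|)%N by rewrite /D cardsU leq_subr.
    have g3 := leq_imset_card fp (mem U).
    have h1 := cardsID M (~: I).
    have h2 := cardsID I M.
    have h3 : M :\: I = ~: I :&: M by rewrite setDE setIC.
    rewrite h3 in h2.
    exact: arith0 g1 g2 g3 h1 h2.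
  - have d1 : (M :&: I) :&: U = set0.
      apply: setI0P => x /setIP[xM xI].
      rewrite inE xI /= => /negP; apply.
      by have [w exw wD] := MInb x xM xI; apply/existsP; exists w; rewrite wD.
    have d2 : ((M :&: I) :|: U) :&: B = set0.
      apply: setI0P => x; rewrite in_setU in_setI => /orP[/andP[xM _]|xU] /setIP[/setIP[xn xs] xI].
        by move: xs; rewrite in_setC (Ms x xM).
      move: xU; rewrite inE => /andP[_ nd].
      move: xn nd; rewrite inE => /existsP[w /andP[wS ewx]].
      move/negP; apply; apply/existsP; exists w; rewrite sym ewx andbT.
      move: wS => /setIP[ws wI]; rewrite in_setD wI andbT.
      by apply/negP => /Ms; move: ws; rewrite in_setC => /negbTE ->.
    rewrite cardsU d2 cards0 subn0 cardsU d1 cards0 subn0.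
    by [].
  - apply/subsetP => x; rewrite !inE.
    by case/orP => [/orP[/andP[_ ->]|/andP[->]]|/andP[_ ->]].
  - move=> B0.
    have bI : b \notin I.
      apply/negP => bI.
      have aI : a \notin I by apply/negP => aI; move: (indep _ _ aI bI); rewrite eab.
      have : b \in B.
        rewrite /B !in_setI bI in_setC bs andbT /= inE andbT.
        by apply/existsP; exists a; rewrite eab andbT in_setI !in_setC as_ aI.
      by rewrite B0 in_set0.
    have MI0 : forall x, x \in M -> x \notin I.
      move=> x xM; have [_ [xb _]] := QM x xM.
      move: bI; rewrite !hI -!ltnNge => bl; exact: leq_ltn_trans xb bl.
    have bD0 : b \in D0.
      rewrite in_setD in_setC bI andbT; apply/negP => /Ms; by rewrite (negbTE bs).
    set D1 := (D0 :\ b) :|: [set fp u | u in U].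
    case: (boolP (dominates e D1 I)) => [dD1|ndD1].
    + left.
      have g1 := gammaA_le dD1.
      have g2 : (#|D1| <= #|D0 :\ b| + #|[set fp u | u in U]|)%N by rewrite /D1 cardsU leq_subr.
      have g3 := leq_imset_card fp (mem U).
      have g4 := cardsD1 b D0. rewrite bD0 in g4.
      have h1 := cardsID M (~: I).
      have h2 := cardsID I M.
      have h3 : M :\: I = ~: I :&: M by rewrite setDE setIC.
      rewrite h3 in h2.
      exact: arith4 g1 g2 g3 g4 h1 h2.
    + right.
      move: ndD1 => /forallPn [u]; rewrite negb_imply => /andP[uI nu].
      have uU : u \notin U.
        apply/negP => uU; move/negP: nu; apply; apply/existsP; exists (fp u).
        rewrite fpP andbT in_setU; apply/orP; right; exact: imset_f.
      apply: proper_card; rewrite properE.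
      apply/andP; split.
        apply/subsetP => x; rewrite !inE.
        by case/orP => [/orP[/andP[_ ->]|/andP[->]]|/andP[_ ->]].
      apply/subsetPn; exists u => //.
      rewrite !in_setU in_setI B0 in_set0 (negbTE uU) orbF.
      have : u \notin M by apply/negP => uM; move: (MI0 u uM); rewrite uI.
      by move/negbTE => ->.
split.
- move=> s ncs _.
  have [k1 k2 k3 _] := key s ncs.
  rewrite /beta -hg.
  exact: arith1 k1 k2 (subset_leq_card k3) nI.
- move=> s ncs.
  case: (posnP (beta s)) => hb; last first.
    have [k1 k2 k3 _] := key s ncs.
    rewrite -hg.
    have := arith1 k1 k2 (subset_leq_card k3) nI.
    by rewrite -/(beta s); move/(leq_trans _)=> -> //; rewrite leq_add2l.
  have [k1 k2 k3 k4] := key s ncs.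
  have B0 : nbhd e (~: s :&: ~: I) :&: ~: s :&: I = set0.
    by apply/eqP; rewrite -cards_eq0 -/(beta s) hb.
  rewrite -hg.
  case: (k4 B0) => h.
    exact: arith2 h k2 (subset_leq_card k3) nI.
  exact: arith3 k1 k2 h nI.
Qed.
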